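(* A total ${\cal X}_5$-interpretation $M=\langle T,T\rangle$ is an equilibrium model of a theory $\Gamma$ if and only if $M(\varphi)=2$ for all $\varphi\in\Gamma$ and there is no ${\cal X}_5$-interpretation $M'$ with $M'\le M$, $M'\ne M$, such that $M'(\varphi)=2$ for all $\varphi\in\Gamma$.
   Context: Fix a set $\mathit{At}$ of atoms. An explicit literal is $p$ or $\sim p$ for $p\in\mathit{At}$; a set of explicit literals is consistent if it never contains both $p$ and $\sim p$. Formulas: $\varphi ::= p\mid\bot\mid\varphi\wedge\varphi\mid\varphi\vee\varphi\mid\varphi\to\varphi\mid\sim\varphi$; abbreviations $\neg\varphi:=\varphi\to\bot$, $\top:=\neg\bot$; a theory is a set of formulas. An ${\cal X}_5$-interpretation is a pair $\langle H,T\rangle$ of consistent sets of explicit literals with $H\subseteq T$; total if $H=T$. Satisfaction $\models$ and falsification $=\!\!|\;$: $\langle H,T\rangle\not\models\bot$, $\langle H,T\rangle=\!\!|\;\bot$; $\models p$ iff $p\in H$, $=\!\!|\;p$ iff $\sim p\in H$; $\models\varphi\wedge\psi$ iff both satisfied, $=\!\!|\;\varphi\wedge\psi$ iff at least one falsified; $\models\varphi\vee\psi$ iff at least one satisfied, $=\!\!|\;\varphi\vee\psi$ iff both falsified; $\models\sim\varphi$ iff $=\!\!|\;\varphi$, $=\!\!|\;\sim\varphi$ iff $\models\varphi$; $\langle H,T\rangle\models\varphi\to\psi$ iff (i) $\langle H,T\rangle\not\models\varphi$ or $\langle H,T\rangle\models\psi$ and (ii) $\langle T,T\rangle\not\models\varphi$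 or $\langle T,T\rangle\models\psi$; $\langle H,T\rangle=\!\!|\;\varphi\to\psi$ iff $\langle T,T\rangle\models\varphi$ and $\langle H,T\rangle=\!\!|\;\psi$. $\langle T,T\rangle$ is an equilibrium model of $\Gamma$ if it satisfies every formula of $\Gamma$ and there is no $\langle H,T\rangle$ with $H\subsetneq T$ satisfying every formula of $\Gamma$. Five-valued valuation of $M=\langle H,T\rangle$: $M(p)=2$ if $p\in H$; $-2$ if $\sim p\in H$; $1$ if $p\in T\setminus H$; $-1$ if $\sim p\in T\setminus H$; $0$ otherwise; $M(\bot)=-2$, $M(\top)=2$, $M(\varphi\wedge\psi)=\min$, $M(\varphi\vee\psi)=\max$, $M(\varphi\to\psi)=2$ if $M(\varphi)\le\max(M(\psi),0)$ and $M(\psi)$ otherwise, $M(\sim\varphi)=-M(\varphi)$. For ${\cal X}_5$-interpretations $M=\langle H,T\rangle$, $M'=\langle H',T'\rangle$, $M\le M'$ means $T=T'$ and $H\subseteq H'$. *)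

(* Defs.v *)
From Stdlib Require Import ZArith Bool.
Open Scope Z_scope.

Inductive lit (At : Type) : Type :=
| Pos : At -> lit At
| Neg : At -> lit At.
Arguments Pos {At} _.
Arguments Neg {At} _.

Inductive form (At : Type) : Type :=
| Atom : At -> form At
| Bot : form At
| And : form At -> form At -> form At
| Or : form At -> form At -> form At
| Imp : form At -> form At -> form At
| SNeg : form At -> form At.
Arguments Atom {At} _.
Arguments Bot {At}.
Arguments And {At} _ _.
Arguments Or {At} _ _.
Arguments Imp {At} _ _.
Arguments SNeg {At} _.

Definition litset (At : Type) := lit At -> bool.

Definition consistent {At} (S : litset At) : Prop :=
  forall p : At, ~ (S (Pos p) = true /\ S (Neg p) = true).

Definition lsubset {At} (A B : litset At) : Prop :=
  forall l, A l = true -> B l = true.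

Definition X5interp {At} (H T : litset At) : Prop :=
  consistent H /\ consistent T /\ lsubset H T.

Fixpoint sat {At} (H T : litset At) (f : form At) {struct f} : Prop :=
  match f with
  | Atom p => H (Pos p) = true
  | Bot => False
  | And a b => sat H T a /\ sat H T b
  | Or a b => sat H T a \/ sat H T b
  | Imp a b => (~ sat H T a \/ sat H T b) /\ (~ sat T T a \/ sat T T b)
  | SNeg a => fal H T a
  end
with fal {At} (H T : litset At) (f : form At) {struct f} : Prop :=
  match f with
  | Atom p => H (Neg p) = true
  | Bot => True
  | And a b => fal H T a \/ fal H T b
  | Or a b => fal H T a /\ fal H T b
  | Imp a b => sat T T a /\ fal H T b
  | SNeg a => sat H T a
  end.

Definition theory (At : Type) := form At -> Prop.

Definition equilibrium_model {At} (Gamma : theory At) (T : litset At) : Prop :=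
  (forall f, Gamma f -> sat T T f) /\
  ~ (exists H : litset At,
       X5interp H T /\ lsubset H T /\ (exists l, T l = true /\ H l = false) /\
       (forall f, Gamma f -> sat H T f)).

Definition val_atom {At} (H T : litset At) (p : At) : Z :=
  if H (Pos p) then 2
  else if H (Neg p) then -2
  else if T (Pos p) then 1
  else if T (Neg p) then -1
  else 0.

Fixpoint val {At} (H T : litset At) (f : form At) : Z :=
  match f with
  | Atom p => val_atom H T p
  | Bot => -2
  | And a b => Z.min (val H T a) (val H T b)
  | Or a b => Z.max (val H T a) (val H T b)
  | Imp a b => if val H T a <=? Z.max (val H T b) 0 then 2 else val H T b
  | SNeg a => - val H T a
  end.

Definition x5_le {At} (M' M : litset At * litset At) : Prop :=
  snd M' = snd M /\ lsubset (fst M') (fst M).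

(* Main.v *)
Require Import Defs.
From Stdlib Require Import ZArith Lia Classical FunctionalExtensionality.
Open Scope Z_scope.

Lemma key {At} (H T : litset At) : X5interp H T -> forall f,
  (val H T f = 2 <-> sat H T f) /\ (val H T f = -2 <-> fal H T f) /\
  (val H T f >= 1 <-> sat T T f) /\ (val H T f <= -1 <-> fal T T f) /\
  (-2 <= val H T f <= 2).
Proof.
  intros [cH [cT sub]] f.
  induction f as [p| |a IHa b IHb|a IHa b IHb|a IHa b IHb|a IHa]; simpl.
  - unfold val_atom.
    specialize (cH p). specialize (cT p).
    pose proof (sub (Pos p)) as sP. pose proof (sub (Neg p)) as sN.
    destruct (H (Pos p)), (H (Neg p)), (T (Pos p)), (T (Neg p));
      intuition (try discriminate; try lia).
  - intuition lia.
  - destruct IHa as [a1 [a2 [a3 [a4 a5]]]]; destruct IHb as [b1 [b2 [b3 [b4 b5]]]].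
    rewrite <- a1, <- a2, <- a3, <- a4, <- b1, <- b2, <- b3, <- b4. lia.
  - destruct IHa as [a1 [a2 [a3 [a4 a5]]]]; destruct IHb as [b1 [b2 [b3 [b4 b5]]]].
    rewrite <- a1, <- a2, <- a3, <- a4, <- b1, <- b2, <- b3, <- b4. lia.
  - destruct IHa as [a1 [a2 [a3 [a4 a5]]]]; destruct IHb as [b1 [b2 [b3 [b4 b5]]]].
    rewrite <- a1, <- a3, <- b1, <- b2, <- b3, <- b4.
    destruct (Z.leb_spec (val H T a) (Z.max (val H T b) 0)); lia.
  - destruct IHa as [a1 [a2 [a3 [a4 a5]]]].
    rewrite <- a1, <- a2, <- a3, <- a4. lia.
Qed.

Theorem theorem6 (At : Type) (Gamma : theory At) (T : litset At) :
  consistent T ->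
  (equilibrium_model Gamma T <->
   ((forall f, Gamma f -> val T T f = 2) /\
    ~ (exists M' : litset At * litset At,
         X5interp (fst M') (snd M') /\ x5_le M' (T, T) /\ M' <> (T, T) /\
         (forall f, Gamma f -> val (fst M') (snd M') f = 2)))).
Proof.
  intros cT.
  assert (XT : X5interp T T) by (repeat split; auto; intros l h; exact h).
  unfold equilibrium_model. split.
  - intros [Hs Hn]. split.
    + intros f Gf. apply (proj2 (proj1 (key T T XT f))). auto.
    + intros [[H' T'] [X [[e s] [ne G]]]]. simpl in *. subst T'.
      apply Hn. exists H'. split; [exact X|]. split; [exact s|]. split.
      * apply NNPP. intros C. apply ne. f_equal. apply functional_extensionality.
        intros l. destruct (H' l) eqn:E1, (T l) eqn:E2; auto.
        -- apply s in E1. congruence.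
        -- exfalso. apply C. exists l. auto.
      * intros f Gf. apply (proj1 (proj1 (key H' T X f))). auto.
  - intros [Hs Hn]. split.
    + intros f Gf. apply (proj1 (key T T XT f)). auto.
    + intros [H' [X [s [[l [e1 e2]] G]]]]. apply Hn.
      exists (H', T). simpl. split; [exact X|]. split; [split; auto|]. split.
      * intros E. inversion E. subst. congruence.
      * intros f Gf. apply (proj2 (proj1 (key H' T X f))). auto.
Qed.
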